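(* Let a WIFS satisfy the $\Phi$-FNC for an iteration rule $\Phi$, with transition graph $\mathcal G$. Suppose every vertex of every non-essential loop class of $\mathcal G$ is a neighbour set of cardinality one. Then $\mathcal G$ is decomposable.
   Context: Setting. A weighted iterated function system (WIFS) $(S_i,p_i)_{i\in\mathcal I}$ consists of a finite index set $\mathcal I$, maps $S_i(x)=r_ix+d_i$ on $\mathbb R$ with $0<|r_i|<1$, and probabilities $p_i>0$ with $\sum_i p_i=1$. Its self-similar set $K$ is the unique nonempty compact set with $K=\bigcup_i S_i(K)$ and its self-similar measure $\mu$ is the unique Borel probability measure with $\mu(E)=\sum_i p_i\,\mu(S_i^{-1}(E))$. Standing assumptions: $K$ is not a singleton and its convex hull is $[0,1]$. For a finite word $\sigma=\sigma_1\cdots\sigma_n$ over $\mathcal I$ (the set of all finite words, including the empty word, is $\mathcal I^*$) put $S_\sigma=S_{\sigma_1}\circ\cdots\circ S_{\sigma_n}$, $p_\sigma=p_{\sigma_1}\cdots p_{\sigma_n}$ (identity and $1$ for the empty word). For a map $f$, $f\mu:=\mu\circ f^{-1}$. Iteration rules and net intervals. Fix a total order on the affine bijections $x\mapsto ax+b$ ($a\ne0$) of $\mathbb R$. For a closed interval $J$ let $T_J(x)=rx+c$ ($r>0$) be the map with $T_J([0,1])=J$. An iteration rule $\Phi$ assigns to each finite strictly increasing tuple $v=(f_1,\dots,f_m)$ of such maps a tuple $\Phi(v)=(\mathcal C_1,\dots,\mathcal C_m)$ of finite subsets of $\mathcal I^*$ such that for each $i$ and all large $n$ every word of length $n$ has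 a unique prefix in $\mathcal C_i$. Children of a pair $(\Delta,v)$, $\Delta=[a,b]$: let $\mathcal Y=\{T_\Delta\circ f_i\circ S_\tau:1\le i\le m,\tau\in\mathcal C_i\}$ and list $\{a,b\}\cup\{g(z):g\in\mathcal Y,z\in\{0,1\},g(z)\in\Delta\}$ as $a=y_1<\dots<y_{k+1}=b$; the children are the pairs $(\Delta',v')$ with $\Delta'=[y_j,y_{j+1}]$, $(y_j,y_{j+1})\cap K\ne\emptyset$, and $v'$ the increasing tuple of the distinct maps $T_{\Delta'}^{-1}\circ g$, $g\in\mathcal Y$, $g(K)\cap(y_j,y_{j+1})\ne\emptyset$. Let $\mathcal N_0=\{([0,1],(\mathrm{id}))\}$ and $\mathcal N_{n+1}$ the set of children of members of $\mathcal N_n$; second components are neighbour sets. $\Phi$ must also satisfy: (i) $\max\{r\,\mathrm{diam}\Delta:(\Delta,v)\in\mathcal N_n,(x\mapsto rx+c)\in v\}\to0$; (ii) if $f_1\neq f_2$ lie in a neighbour set then $f_1\circ S_\sigma\ne f_2$ for all $\sigma\in\mathcal I^*$. (Convention: a pair whose only child has the same interval is replaced by that child.) Transition graph. Children and their data depend only on $v$. The transition graph $\mathcal G$ has as vertices the neighbour sets occurring, root $v_{\mathrm{root}}=(\mathrm{id})$, and one edge $e$ from $v$ to $v'$ for each child $(\Delta',v')$ of a pair $(\Delta,v)$ (distinguished by the relative position of $\Delta'$ in $\Delta$), with transition matrix $T(e)$: for $v=(f_1,\dots,f_m)$, $v'=(g_1,\dots,g_n)$, $\Phi(v)=(\mathcal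 C_1,\dots,\mathcal C_m)$, $T(e)$ is the $m\times n$ matrix with $T(e)_{i,j}=\frac{f_i\mu((0,1))}{g_j\mu((0,1))}\sum p_\omega$ over $\omega\in\mathcal C_i$ with $T_\Delta\circ f_i\circ S_\omega=T_{\Delta'}\circ g_j$. For a path $\eta=(e_1,\dots,e_n)$, $T(\eta)=T(e_1)\cdots T(e_n)$ and $\|A\|$ = sum of entries. $\Omega^*$ is the set of finite paths starting at $v_{\mathrm{root}}$. The WIFS satisfies the $\Phi$-FNC if $\mathcal G$ is finite. A loop class is an induced subgraph $\mathcal L$ of $\mathcal G$ that is strongly connected, has at least one edge, and is maximal with these properties; it is essential if every vertex reachable by a directed path from a vertex of $\mathcal L$ lies in $\mathcal L$. Decomposability. A path with vertices $v_0,\dots,v_n$ is a transition path if $v_0$ lies in a loop class $\mathcal L_j$, $v_n$ in a loop class $\mathcal L_k$ with $k\ne j$, and $v_1,\dots,v_{n-1}$ lie in no loop class; it is an initial path if instead $v_0=v_{\mathrm{root}}$. Order the loop classes $\mathcal L_1,\dots,\mathcal L_m$ so that transition paths only go from $\mathcal L_i$ to $\mathcal L_j$ with $i<j$. Every $\eta\in\Omega^*$ is uniquely written $\eta=\phi\lambda_1\psi_1\cdots\psi_{m-1}\lambda_m$ with $\phi$ an initial path, $\lambda_i$ a path in $\mathcal L_i$, $\psi_i$ transition paths (all possibly empty); $\|T(\lambda_i)\|:=1$ for empty $\lambda_i$. $\mathcal G$ is decomposable if there is $C\ge1$, depending only on $\mathcal G$, with $C^{-1}\prod_i\|T(\lambda_i)\|\le\|T(\eta)\|\le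 C\prod_i\|T(\lambda_i)\|$ for all $\eta\in\Omega^*$. *)

(* Defs.v *)
From HB Require Import structures.
From mathcomp Require Import all_boot all_order all_algebra.
From mathcomp Require Import all_classical all_reals all_analysis.
Set Implicit Arguments. Unset Strict Implicit. Unset Printing Implicit Defensive.
Import Order.TTheory GRing.Theory Num.Theory.
Import numFieldNormedType.Exports.
Local Open Scope classical_set_scope.
Local Open Scope ring_scope.

Section WIFSDefs.
Variable R : realType.

(** Affine maps x |-> a x + b are represented by the pair (a, b). *)
Definition amap := (R * R)%type.
Definition app (f : amap) (x : R) : R := f.1 * x + f.2.
Definition comp (f g : amap) : amap := (f.1 * g.1, f.1 * g.2 + f.2).
Definition idm : amap := (1, 0).
Definition inva (f : amap) : amap := (f.1^-1, - (f.2 / f.1)).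

(** Closed intervals [a, b] are represented by (a, b). *)
Definition intv := (R * R)%type.
Definition TJ (J : intv) : amap := (J.2 - J.1, J.1).
(** Neighbour sets: increasing tuples of affine maps. *)
Definition nbset := seq amap.
Definition npair := (intv * nbset)%type.
Definition oitv (c d : R) : set R := [set x | c < x < d].

Definition convex_set (C : set R) :=
  forall x y t, C x -> C y -> 0 <= t <= 1 -> C (t * x + (1 - t) * y).
Definition convex_hull (A : set R) : set R :=
  [set x | forall C, convex_set C -> A `<=` C -> C x].

Definition strict_total_order (ltm : rel amap) :=
  [/\ (forall f, f.1 != 0 -> ~~ ltm f f),
      (forall f g h, f.1 != 0 -> g.1 != 0 -> h.1 != 0 ->
          ltm f g -> ltm g h -> ltm f h) &
      (forall f g, f.1 != 0 -> g.1 != 0 -> f != g -> ltm f g || ltm g f)].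

Definition inc_tuple (ltm : rel amap) (v : nbset) :=
  sorted ltm v && all (fun f => f.1 != 0) v.

Definition to_nbset (ltm : rel amap) (s : seq amap) : nbset :=
  sort (fun f g => (f == g) || ltm f g) (undup s).

Variable I : finType.

Definition Sw (S : I -> amap) (w : seq I) : amap :=
  foldr (fun i acc => comp (S i) acc) idm w.
Definition pw (p : I -> R) (w : seq I) : R := \prod_(i <- w) p i.

Definition is_wifs (S : I -> amap) (p : I -> R) :=
  [/\ forall i, 0 < `|(S i).1| < 1, forall i, 0 < p i & \sum_i p i = 1].

Definition is_ss_set (S : I -> amap) (K : set R) :=
  [/\ K !=set0, compact K & K = \bigcup_(i in setT) (app (S i) @` K)].

Definition is_ss_measure (S : I -> amap) (p : I -> R) (mu : probability R R) :=
  forall E, measurable E ->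
    mu E = (\sum_(i : I) ((p i)%:E * mu (app (S i) @^-1` E)))%E.

Definition prefix_code (C : seq (seq I)) :=
  exists N, forall n, (N <= n)%N -> forall w : seq I, size w = n ->
    exists! t, t \in C /\ prefix t w.

Variables (S : I -> amap) (K : set R) (ltm : rel amap)
  (Phi : nbset -> seq (seq (seq I))).

Definition Ymaps (q : npair) : seq amap :=
  flatten [seq [seq comp (TJ q.1) (comp fC.1 (Sw S t)) | t <- fC.2]
          | fC <- zip q.2 (Phi q.2)].

Definition ypts (q : npair) : seq R :=
  sort <=%R (undup (q.1.1 :: q.1.2 ::
    [seq z <- flatten [seq [:: app g 0; app g 1] | g <- Ymaps q]
       | q.1.1 <= z <= q.1.2])).

(** Children of a pair (Delta, v), before applying the replacement convention. *)
Definition raw_children (q : npair) : seq npair :=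
  [seq (cd, to_nbset ltm [seq comp (inva (TJ cd)) g
                         | g <- Ymaps q & `[< (app g @` K) `&` oitv cd.1 cd.2 !=set0 >]])
  | cd <- zip (ypts q) (behead (ypts q)) & `[< K `&` oitv cd.1 cd.2 !=set0 >]].

Definition trivial_pair (q : npair) :=
  exists q1, raw_children q = [:: q1] /\ q1.1 = q.1.

(** Replacement convention: [rchain q c] holds when c = q :: q1 :: ... :: qk
    where each pair is the only child (with the same interval) of the previous
    one and qk is not trivial; qk is the pair that replaces q. *)
Inductive rchain : npair -> seq npair -> Prop :=
| rc_stop q : ~ trivial_pair q -> rchain q [:: q]
| rc_step q q1 c : raw_children q = [:: q1] -> q1.1 = q.1 ->
    rchain q1 c -> rchain q (q :: c).

Definition child (q q' : npair) :=
  exists q0 c, [/\ q0 \in raw_children q, rchain q0 c & last q0 c = q'].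

Definition root_nb : nbset := [:: idm].
Definition root_pair : npair := ((0, 1), root_nb).

Inductive Nn : nat -> npair -> Prop :=
| N0 : Nn 0 root_pair
| NS n q q' : Nn n q -> child q q' -> Nn n.+1 q'.

Definition iteration_rule :=
  [/\ (forall v, inc_tuple ltm v ->
         [/\ size (Phi v) = size v,
             forall C, C \in Phi v -> uniq C &
             forall C, C \in Phi v -> prefix_code C]),
      (forall eps : R, 0 < eps -> exists n0, forall n q, (n0 <= n)%N -> Nn n q ->
          forall f, f \in q.2 -> `|f.1| * (q.1.2 - q.1.1) <= eps) &
      (forall n q, Nn n q -> forall f1 f2, f1 \in q.2 -> f2 \in q.2 -> f1 != f2 ->
          forall s : seq I, comp f1 (Sw S s) != f2)].

(** Matrices are represented by their entry functions (0-based indices). *)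
Definition mxm (n : nat) (A B : nat -> nat -> R) : nat -> nat -> R :=
  fun i k => \sum_(j < n) A i j * B j k.
Definition mx1 : nat -> nat -> R := fun i j => (i == j)%:R.
Definition mxnorm (m n : nat) (A : nat -> nat -> R) : R :=
  \sum_(i < m) \sum_(j < n) A i j.

Variables (p : I -> R) (mu : probability R R).

Definition muval (f : amap) : R := fine (mu (app f @^-1` oitv 0 1)).

Definition Tmx (q q' : npair) : nat -> nat -> R := fun i j =>
  let f := nth idm q.2 i in let g := nth idm q'.2 j in
  muval f / muval g *
  \sum_(w <- nth [::] (Phi q.2) i |
          comp (TJ q.1) (comp f (Sw S w)) == comp (TJ q'.1) g) pw p w.

Fixpoint chain_mx (q : npair) (c : seq npair) : nat -> nat -> R :=
  match c with
  | [::] => mx1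
  | q1 :: c' => mxm (size q1.2) (Tmx q q1) (chain_mx q1 c')
  end.

Record edge := Edge { esrc : nbset; epos : intv; etgt : nbset;
                      emat : nat -> nat -> R }.

Definition relpos (D D' : intv) : intv :=
  (app (inva (TJ D)) D'.1, app (inva (TJ D)) D'.2).

Definition Vset : set nbset := [set v | exists n q, Nn n q /\ q.2 = v].

Definition Eset : set edge :=
  [set e | exists n q q0 c, [/\ Nn n q, q0 \in raw_children q, rchain q0 c &
       e = Edge q.2 (relpos q.1 q0.1) (last q0 c).2 (chain_mx q c)]].

Definition FNC := finite_set Vset /\ finite_set Eset.

Fixpoint gpath (v w : nbset) (es : seq edge) : Prop :=
  match es with
  | [::] => v = w
  | e :: es' => [/\ Eset e, esrc e = v & gpath (etgt e) w es']
  end.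

Definition reach (v w : nbset) := exists es, gpath v w es.

Definition gpath_in (L : set nbset) (v w : nbset) (es : seq edge) :=
  [/\ L v, gpath v w es & all (fun e => `[< L (etgt e) >]) es].

Definition strongly_connected (L : set nbset) :=
  forall v w, L v -> L w -> exists es, gpath_in L v w es.
Definition has_edge (L : set nbset) :=
  exists e, [/\ Eset e, L (esrc e) & L (etgt e)].

Definition loop_class (L : set nbset) :=
  [/\ L `<=` Vset, strongly_connected L, has_edge L &
      forall L', L `<=` L' -> L' `<=` Vset -> strongly_connected L' ->
                 has_edge L' -> L' = L].

Definition essential (L : set nbset) :=
  forall v w, L v -> reach v w -> L w.

Fixpoint Tpath (es : seq edge) : nat -> nat -> R :=
  match es with
  | [::] => mx1
  | e :: es' => mxm (size (etgt e)) (emat e) (Tpath es')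
  end.

Definition pnorm (es : seq edge) : R :=
  match es with
  | [::] => 1
  | e :: _ => mxnorm (size (esrc e)) (size (etgt (last e es))) (Tpath es)
  end.

Definition lam (L : set nbset) (es : seq edge) : seq edge :=
  [seq e <- es | `[< L (esrc e) /\ L (etgt e) >]].

Definition decomposable :=
  exists C : R, 1 <= C /\
    forall w es, gpath root_nb w es ->
      C^-1 * \big[*%R/1]_(L \in loop_class) pnorm (lam L es) <= pnorm es /\
      pnorm es <= C * \big[*%R/1]_(L \in loop_class) pnorm (lam L es).

End WIFSDefs.

(* Main.v *)
Require Import Defs.
From HB Require Import structures.
From mathcomp Require Import all_boot all_order all_algebra.
From mathcomp Require Import all_classical all_reals all_analysis.
From mathcomp Require Import ring lra.
Import Order.TTheory GRing.Theory Num.Theory.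
Import numFieldNormedType.Exports.
Local Open Scope classical_set_scope.
Local Open Scope ring_scope.
Set Implicit Arguments. Unset Strict Implicit. Unset Printing Implicit Defensive.


Section PartA.
Variables (R : realType) (I : finType) (S : I -> amap R) (p : I -> R)
  (K : set R) (mu : probability R R).

Lemma app_comp (f g : amap R) x : app (Defs.comp f g) x = app f (app g x).
Proof. rewrite /app /Defs.comp /=; ring. Qed.

Lemma app_Sw_cat (u v : seq I) x :
  app (Sw S (u ++ v)) x = app (Sw S u) (app (Sw S v) x).
Proof.
elim: u x => [|i u IH] x /=; first by rewrite /app /idm /=; ring.
by rewrite !app_comp IH.
Qed.

Lemma app_cont (f : amap R) : continuous (app f).
Proof.
move=> x; rewrite /app; apply: cvgD; last exact: cvg_cst.
apply: cvgM; [exact: cvg_cst | exact: cvg_id].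
Qed.

Lemma app_meas (f : amap R) (E : set R) : measurable E ->
  measurable (app f @^-1` E).
Proof.
move=> mE.
have mf := measurable_realfun.continuous_measurable_fun (@app_cont f).
by rewrite -(setTI (_ @^-1` _)); apply: mf.
Qed.


Lemma small_pow (r e : R) : 0 <= r < 1 -> 0 < e -> exists n, r ^+ n < e.
Proof.
move=> /andP[r0 r1] e0.
have hr : `|r| < 1 by rewrite ger0_norm.
have := @cvgr0_norm_lt _ _ _ _ _ _ (cvg_expr hr) e e0.
case=> N _ HN; exists N; have := HN N (leqnn N).
by rewrite /= ger0_norm ?exprn_ge0.
Qed.

Lemma oitv_meas (c d : R) : measurable (oitv c d).
Proof.
have -> : oitv c d = `]c, d[%classic by rewrite set_itvoo.
exact: measurable_itv.
Qed.

Hypothesis Hw : is_wifs S p.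
Hypothesis Hss : is_ss_set S K.
Hypothesis Hm : is_ss_measure S p mu.
Hypothesis Hch : convex_hull K = [set x | 0 <= x <= 1].

Lemma K_sub01 x : K x -> 0 <= x <= 1.
Proof.
move=> Kx; have : convex_hull K x by move=> C _ KC; exact: KC.
by rewrite Hch.
Qed.

Lemma K_S i x : K x -> K (app (S i) x).
Proof.
case: Hss => _ _ HK Kx; rewrite HK; exists i => //; by exists x.
Qed.

Lemma K_Sw w x : K x -> K (app (Sw S w) x).
Proof.
elim: w => [|i w IH] Kx /=; first by rewrite /app /idm /= mul1r addr0.
by rewrite app_comp; apply: K_S; apply: IH.
Qed.

Lemma K_inv y : K y -> exists i z, K z /\ y = app (S i) z.
Proof.
case: Hss => _ _ HK; rewrite {1}HK => -[i _ [z Kz <-]]; by exists i, z.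
Qed.

Lemma rho_ex : exists r : R, 0 <= r < 1 /\ forall i, `|(S i).1| <= r.
Proof.
case: Hw => Hr _ _.
suff [r [hr H]] : exists r, 0 <= r < 1 /\ forall i, i \in enum I -> `|(S i).1| <= r.
  by exists r; split=> // i; apply: H; rewrite mem_enum.
elim: (enum I) => [|i s [r [/andP[r0 r1] H]]]; first by exists 0; rewrite lexx ltr01.
exists (Num.max r `|(S i).1|); split.
  rewrite le_max r0 /= gt_max r1 /=; by case/andP: (Hr i).
move=> j; rewrite inE => /orP[/eqP->|js]; first by rewrite le_max lexx orbT.
by rewrite le_max H.
Qed.

Lemma Sw1_nz w : (Sw S w).1 != 0.
Proof.
case: Hw => Hr _ _.
elim: w => [|i w IH] /=; first by rewrite oner_neq0.
rewrite mulf_neq0 //; have /andP[h _] := Hr i; by rewrite -normr_gt0.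
Qed.

Lemma rep_words (r : R) : 0 <= r -> (forall i, `|(S i).1| <= r) -> forall n y, K y ->
  exists w z, [/\ size w = n, K z, y = app (Sw S w) z & `|(Sw S w).1| <= r ^+ n].
Proof.
move=> r0 Hr; elim=> [|n IH] y Ky.
  exists [::], y; split=> //=; last by rewrite normr1 expr0.
  by rewrite /app /idm /= mul1r addr0.
have [i [z [Kz ->]]] := K_inv Ky.
have [w [z' [sw Kz' -> Hn]]] := IH z Kz.
exists (i :: w), z'; split.
- by rewrite /= sw.
- done.
- by rewrite /=; symmetry; apply: app_comp.
rewrite /= normrM exprS; apply: ler_pM => //; exact: normr_ge0.
Qed.

Lemma mu_ge0 E : (0 <= mu E)%E.
Proof. exact: measure_ge0. Qed.

Lemma mu0_pre i E : measurable E -> mu E = 0%E -> mu (app (S i) @^-1` E) = 0%E.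
Proof.
case: Hw => _ Hp _ mE h0.
have := Hm mE; rewrite h0 => /esym/eqP.
rewrite seq_psume_eq0; last first.
  move=> j _; apply: mule_ge0; [by rewrite lee_fin ltW | exact: mu_ge0].
move/allP => /(_ i (mem_index_enum i)) /= /eqP.
move/eqP; rewrite mule_eq0 eqe (gt_eqF (Hp i)) /= => /eqP //.
Qed.

Lemma mu0_Sw w E : measurable E -> mu E = 0%E -> mu (app (Sw S w) @^-1` E) = 0%E.
Proof.
elim: w E => [|i w IH] E mE h0 /=.
  suff -> : app (idm R) @^-1` E = E by [].
  by apply/funext => x; rewrite /preimage /app /idm /= mul1r addr0.
have -> : app (Defs.comp (S i) (Sw S w)) @^-1` E = app (Sw S w) @^-1` (app (S i) @^-1` E).
  by apply/funext => x; rewrite /preimage /= app_comp.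
apply: IH; first exact: app_meas.
exact: mu0_pre.
Qed.


Lemma supp y (d : R) : K y -> 0 < d -> (0 < mu (oitv (y - d) (y + d)))%E.
Proof.
move=> Ky d0; have [r [/andP[r0 r1] Hr]] := rho_ex.
rewrite lt0e mu_ge0 andbT; apply/negP => /eqP h0.
have Hbox : forall M : nat, mu (oitv (- M%:R - 1) (M%:R + 1)) = 0%E.
  move=> M.
  have M2 : 0 < M%:R + 2 :> R by rewrite ltr_wpDl.
  have [n hn] := small_pow (r:=r) (e := d / (M%:R + 2)) (introT andP (conj r0 r1)) (divr_gt0 d0 M2).
  have [w [z [_ Kz ey ha]]] := rep_words r0 Hr n Ky.
  apply/eqP; rewrite eq_le mu_ge0 andbT -(mu0_Sw w (oitv_meas (y - d) (y + d)) h0).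
  apply: le_measure; rewrite ?inE; [exact: oitv_meas | exact: app_meas (oitv_meas _ _)| ].
  move=> t /= /andP[t1 t2].
  have /andP[z0 z1] := K_sub01 Kz.
  have htz : `|t - z| <= M%:R + 2.
    rewrite ler_norml; apply/andP; split; lra.
  have hk : `|app (Sw S w) t - y| < d.
    have -> : app (Sw S w) t - y = (Sw S w).1 * (t - z) by rewrite ey /app; ring.
    rewrite normrM; apply: (le_lt_trans (ler_pM (normr_ge0 _) (normr_ge0 _) ha htz)).
    by rewrite -ltr_pdivlMr.
  move: hk; rewrite ltr_norml => /andP[k1 k2]; apply/andP; split; lra.
have := @measure_sigma_subadditive _ _ _ mu setT (fun n => oitv (- n%:R - 1) (n%:R + 1))
  (fun n => oitv_meas _ _) measurableT.
have sub : [set: R] `<=` \bigcup_n oitv (- n%:R - 1) (n%:R + 1).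
  move=> x _; exists (Num.Def.archi_bound `|x|) => //=.
  have := archi_boundP (normr_ge0 x); rewrite ltr_norml => /andP[a1 a2].
  apply/andP; split; lra.
move=> /(_ sub); rewrite eseries0 //; last by move=> i _ _; apply: Hbox.
move=> h; have : (1 <= 0 :> \bar R)%E by rewrite -(probability_setT mu); exact: h.
by rewrite lee_fin ler10.
Qed.

Lemma muval_gt0 h : (exists y, K y /\ 0 < app h y < 1) -> 0 < muval mu h.
Proof.
move=> [y [Ky /andP[c0 c1]]].
set c := app h y in c0 c1.
set m := Num.min c (1 - c).
have m0 : 0 < m by rewrite lt_min c0 subr_gt0 c1.
have hp : 0 < `|h.1| + 1 by rewrite ltr_wpDl.
set d := m / (`|h.1| + 1).
have d0 : 0 < d by rewrite divr_gt0.
have hd : `|h.1| * d < m.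
  rewrite /d mulrA ltr_pdivrMr // mulrDr mulr1 mulrC ltr_pwDr //.
have sub : oitv (y - d) (y + d) `<=` app h @^-1` oitv 0 1.
  move=> t /= /andP[t1 t2].
  have ht : `|t - y| < d by rewrite ltr_norml; apply/andP; split; lra.
  have : `|app h t - c| < m.
    have -> : app h t - c = h.1 * (t - y) by rewrite /c /app; ring.
    rewrite normrM; apply: le_lt_trans hd.
    by apply: ler_wpM2l; [exact: normr_ge0 | exact: ltW].
  rewrite ltr_norml => /andP[a1 a2].
  have mc : m <= c by rewrite /m ge_min lexx.
  have mc' : m <= 1 - c by rewrite /m ge_min lexx orbT.
  apply/andP; split; lra.
have pos : (0 < mu (app h @^-1` oitv 0 1))%E.
  apply: lt_le_trans (supp Ky d0) _.
  apply: le_measure; rewrite ?inE //; [exact: oitv_meas | exact: app_meas (oitv_meas _ _)].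
rewrite /muval; apply: fine_gt0; rewrite pos /=.
apply: le_lt_trans (probability_le1 _ _) _; first exact: app_meas (oitv_meas _ _).
by rewrite ltry.
Qed.

End PartA.


Section PartB.
Variables (R : realType) (I : finType) (S : I -> amap R) (K : set R) (ltm : rel (amap R))
  (Phi : nbset R -> seq (seq (seq I))).

Lemma mem_YmapsP (q : npair R) g : g \in Ymaps S Phi q ->
  exists i t, [/\ (i < size q.2)%N, (i < size (Phi q.2))%N, t \in nth [::] (Phi q.2) i &
    g = Defs.comp (TJ q.1) (Defs.comp (nth (idm R) q.2 i) (Sw S t))].
Proof.
rewrite /Ymaps => /flattenP [s /mapP [fC fCin ->]] /mapP [t tin ->].
move: tin; move: fCin => /(nthP (idm R, [::])) [i ilt <-].
rewrite !nth_zip_cond ilt /= => tin.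
rewrite size_zip leq_min in ilt; case/andP: ilt => i1 i2.
by exists i, t; split.
Qed.

Lemma mem_Ymaps (q : npair R) i t : (i < size q.2)%N -> (i < size (Phi q.2))%N ->
  t \in nth [::] (Phi q.2) i ->
  Defs.comp (TJ q.1) (Defs.comp (nth (idm R) q.2 i) (Sw S t)) \in Ymaps S Phi q.
Proof.
move=> i1 i2 tin; rewrite /Ymaps; apply/flattenP.
have iz : (i < size (zip q.2 (Phi q.2)))%N by rewrite size_zip leq_min i1 i2.
exists [seq Defs.comp (TJ q.1) (Defs.comp (nth (idm R) q.2 i) (Sw S t0)) | t0 <- nth [::] (Phi q.2) i].
  apply/mapP; exists (nth (idm R, [::]) (zip q.2 (Phi q.2)) i); first exact: mem_nth.
  by rewrite nth_zip_cond iz.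
by apply/mapP; exists t.
Qed.

Lemma raw_childP (q q0 : npair R) : q0 \in raw_children S K ltm Phi q ->
  [/\ q0.2 = to_nbset ltm [seq Defs.comp (inva (TJ q0.1)) g | g <- Ymaps S Phi q &
        `[< (app g @` K) `&` oitv q0.1.1 q0.1.2 !=set0 >]],
      q0.1 \in zip (ypts S Phi q) (behead (ypts S Phi q)) &
      K `&` oitv q0.1.1 q0.1.2 !=set0].
Proof.
rewrite /raw_children => /mapP [cd]; rewrite mem_filter => /andP[/asboolP hK cdin] -> /=.
by split.
Qed.

Lemma mem_childP (q q0 : npair R) h : q0 \in raw_children S K ltm Phi q -> h \in q0.2 ->
  exists g, [/\ g \in Ymaps S Phi q, (app g @` K) `&` oitv q0.1.1 q0.1.2 !=set0 &
     h = Defs.comp (inva (TJ q0.1)) g].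
Proof.
move=> /raw_childP [-> _ _]; rewrite /to_nbset mem_sort mem_undup.
move=> /mapP [g]; rewrite mem_filter => /andP[/asboolP hg gin] ->.
by exists g.
Qed.

Lemma TJ_inv (cd : intv R) g : cd.1 < cd.2 ->
  Defs.comp (TJ cd) (Defs.comp (inva (TJ cd)) g) = g.
Proof.
move=> lt; have nz : cd.2 - cd.1 != 0 by rewrite subr_eq0 gt_eqF.
case: g => a b; rewrite /Defs.comp /inva /TJ /=; congr pair; field; exact: nz.
Qed.

Lemma path_strict (l : seq (amap R)) x :
  path (fun f g => (f == g) || ltm f g) x l -> uniq (x :: l) -> path ltm x l.
Proof.
elim: l x => [//|y l IH] x /= /andP[/orP[/eqP xy|h] pl] /andP[nx ul].
  by move: nx; rewrite xy inE eqxx.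
by rewrite h /= IH.
Qed.

Lemma to_nbset_inc s : strict_total_order ltm -> all (fun f : amap R => f.1 != 0) s ->
  inc_tuple ltm (to_nbset ltm s).
Proof.
case=> _ _ tot alls; rewrite /inc_tuple /to_nbset all_sort all_undup alls andbT.
have srt : sorted (fun f g => (f == g) || ltm f g) (sort (fun f g => (f == g) || ltm f g) (undup s)).
  apply: (sort_sorted_in (P := fun f : amap R => f.1 != 0)); last by rewrite all_undup.
  move=> f g f0 g0; case: (eqVneq f g) => [->//|fg] /=.
  by apply: tot.
move: srt; set l := sort _ _; have ul : uniq l by rewrite sort_uniq undup_uniq.
case: l ul => [//|x l] ul /= pl; exact: path_strict.
Qed.


Lemma mem_zip1 (T1 T2 : eqType) (s : seq T1) (t : seq T2) c :
  c \in zip s t -> c.1 \in s /\ c.2 \in t.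
Proof.
case: s => [|x0 s]; first by case: t.
case: t => [|y0 t]; first by [].
move=> /(nthP (x0, y0)) [i ilt <-]; rewrite nth_zip_cond ilt /=.
by rewrite size_zip leq_min in ilt; case/andP: ilt => i1 i2; split; apply: mem_nth.
Qed.

Lemma ypts_in (q : npair R) z : q.1.1 <= q.1.2 -> z \in ypts S Phi q -> q.1.1 <= z <= q.1.2.
Proof.
move=> le; rewrite /ypts mem_sort mem_undup !inE => /orP[/eqP->|/orP[/eqP->|]].
- by rewrite lexx le.
- by rewrite lexx le.
by rewrite mem_filter => /andP[].
Qed.

Lemma inva_app (cd : intv R) u : cd.1 < cd.2 ->
  app (inva (TJ cd)) u = (u - cd.1) / (cd.2 - cd.1).
Proof.
move=> lt; have nz : cd.2 - cd.1 != 0 by rewrite subr_eq0 gt_eqF.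
rewrite /app /inva /TJ /=; field; exact: nz.
Qed.

Definition Good (q : npair R) : Prop := [/\ q.1.1 < q.1.2, inc_tuple ltm q.2,
   (forall x, K x -> q.1.1 < x < q.1.2 ->
      exists2 h, h \in q.2 & exists2 y, K y & x = app (Defs.comp (TJ q.1) h) y),
   (exists x, K x /\ q.1.1 < x < q.1.2) &
   (forall h, h \in q.2 -> exists y, K y /\ 0 < app h y < 1)].

Variable p : I -> R.
Hypothesis Hw : is_wifs S p.
Hypothesis Hss : is_ss_set S K.
Hypothesis Hns : ~ exists x : R, K = [set x].
Hypothesis Hch : convex_hull K = [set x | 0 <= x <= 1].
Hypothesis Hlt : strict_total_order ltm.
Hypothesis Hir : iteration_rule S K ltm Phi.

Lemma K01 : exists x, K x /\ 0 < x < 1.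
Proof.
apply: contrapT => hn.
have K01 : forall x, K x -> x = 0 \/ x = 1.
  move=> x Kx; have /andP[x0 x1] := K_sub01 Hch Kx.
  case: (eqVneq x 0) => [->|xn0]; first by left.
  case: (eqVneq x 1) => [->|xn1]; first by right.
  exfalso; apply: hn; exists x; split => //; apply/andP; split.
    by rewrite lt_neqAle eq_sym xn0.
  by rewrite lt_neqAle xn1.
case: Hss => [[x0 Kx0] _ _].
have K0 : K 0.
  case: (K01 _ Kx0) => [<-//|e1]; apply: contrapT => nK0; apply: Hns; exists 1.
  apply/funext => y; apply/propext; split; first by move=> Ky; case: (K01 _ Ky) => // e; rewrite e in Ky.
  by move=> ->; rewrite -e1.
have K1 : K 1.
  apply: contrapT => nK1; apply: Hns; exists 0.
  apply/funext => y; apply/propext; split; first by move=> Ky; case: (K01 _ Ky) => // e; rewrite e in Ky.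
  by move=> ->.
case: Hw => Hr Hp Hs.
have [i _] : exists i : I, true.
  apply: contrapT => nI; move: Hs; rewrite big1 ?(@oner_neq0 R) //; last first.
  by move=> i _; exfalso; apply: nI; exists i.
  by move=> /esym /eqP; rewrite oner_eq0.
have a0 := K01 _ (K_S Hss i K0); have a1 := K01 _ (K_S Hss i K1).
have /andP[r0 r1] := Hr i.
have hd : app (S i) 1 - app (S i) 0 = (S i).1 by rewrite /app; ring.
move: r0 r1; rewrite -hd.
by case: a0 => ->; case: a1 => ->; rewrite ?subrr ?normr0 ?ltxx //= ?subr0 ?normr1 ?ltxx //=
  ?sub0r ?normrN ?normr1 ?ltxx.
Qed.

Lemma Good_root : Good (root_pair R).
Proof.
split => /=.
- exact: ltr01.
- by rewrite /inc_tuple /= oner_neq0.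
- move=> x Kx _; exists (idm R); first by rewrite inE.
  by exists x => //; rewrite /app /Defs.comp /TJ /idm /=; ring.
- exact: K01.
- move=> h; rewrite inE => /eqP ->; have [x [Kx hx]] := K01.
  by exists x; split => //; rewrite /app /idm /= mul1r addr0.
Qed.

Lemma Good_child q q0 : Good q -> q0 \in raw_children S K ltm Phi q -> Good q0.
Proof.
move=> [lt inc cov _ _] q0in.
have [eq2 cdin [x0 [Kx0 hx0]]] := raw_childP q0in.
have lt0 : q0.1.1 < q0.1.2 by case/andP: hx0 => a b; apply: lt_trans b.
have [c1 c2] := mem_zip1 cdin.
have /andP[c1a c1b] := ypts_in (ltW lt) c1.
have /andP[c2a c2b] := ypts_in (ltW lt) (mem_behead c2).
split => //.
- rewrite eq2; apply: to_nbset_inc => //.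
  apply/allP => h /mapP [g]; rewrite mem_filter => /andP[_ gin] ->.
  have [i [t [i1 i2 tin ->]]] := mem_YmapsP gin.
  have fnz : (nth (idm R) q.2 i).1 != 0.
    by case/andP: inc => _ /allP; apply; apply: mem_nth.
  rewrite /Defs.comp /inva /TJ /= !mulf_neq0 //.
  + by rewrite invr_eq0 subr_eq0 gt_eqF.
  + by rewrite subr_eq0 gt_eqF.
  + exact: Sw1_nz Hw t.
- move=> x Kx /andP[x1 x2].
  have xin : q.1.1 < x < q.1.2 by apply/andP; split; [apply: le_lt_trans x1|apply: lt_le_trans c2b].
  have [h hin [y Ky ex]] := cov x Kx xin.
  move: hin => /(nthP (idm R)) [i ilt hi].
  case: Hir => Hi _ _; have [hsz _ hpc] := Hi _ inc.
  have i2 : (i < size (Phi q.2))%N by rewrite hsz.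
  have [N HN] := hpc _ (mem_nth [::] i2).
  have [r [/andP[r0 r1] Hr]] := rho_ex Hw.
  have [w [z [sw Kz ey _]]] := rep_words Hss r0 Hr N Ky.
  have [tau [[tauin taupre] _]] := HN N (leqnn N) w sw.
  move: taupre => /prefixP [w' ew].
  set g := Defs.comp (TJ q.1) (Defs.comp (nth (idm R) q.2 i) (Sw S tau)).
  have gin : g \in Ymaps S Phi q by apply: mem_Ymaps.
  set z' := app (Sw S w') z.
  have Kz' : K z' by apply: K_Sw.
  have xe : x = app g z'.
    by rewrite ex ey ew app_Sw_cat /g !app_comp -hi.
  have gK : (app g @` K) `&` oitv q0.1.1 q0.1.2 !=set0.
    exists (app g z'); split; first by exists z'.
    by rewrite /oitv /= -xe x1 x2.
  exists (Defs.comp (inva (TJ q0.1)) g).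
    rewrite eq2 /to_nbset mem_sort mem_undup; apply/mapP; exists g => //.
    by rewrite mem_filter gin andbT; apply/asboolP.
  by exists z' => //; rewrite TJ_inv // -xe.
- by exists x0.
- move=> h hin; have [g [gin [_ [[y Ky <-] hy]] ->]] := mem_childP q0in hin.
  exists y; split => //; rewrite app_comp inva_app //.
  case/andP: hy => y1 y2; apply/andP; split.
    by rewrite divr_gt0 // subr_gt0.
  by rewrite ltr_pdivrMr ?subr_gt0 // mul1r ltrD2r.
Qed.

End PartB.


Section PartC.
Variables (R : realType) (I : finType) (S : I -> amap R) (p : I -> R)
  (K : set R) (mu : probability R R) (ltm : rel (amap R))
  (Phi : nbset R -> seq (seq (seq I))).
Hypothesis Hw : is_wifs S p.
Hypothesis Hss : is_ss_set S K.
Hypothesis Hm : is_ss_measure S p mu.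
Hypothesis Hns : ~ exists x : R, K = [set x].
Hypothesis Hch : convex_hull K = [set x | 0 <= x <= 1].
Hypothesis Hlt : strict_total_order ltm.
Hypothesis Hir : iteration_rule S K ltm Phi.

Local Notation Good := (Good K ltm).

Lemma rchain_head q c : rchain S K ltm Phi q c -> exists c', c = q :: c'.
Proof. by case=> [q0 _|q0 q1 c0 _ _ _]; [exists [::] | exists c0]. Qed.

Lemma rchain_good q c : rchain S K ltm Phi q c -> Good q -> Good (last q c).
Proof.
elim=> [//|q0 q1 c0 rq1 _ rc IH] G0 /=.
have [c' ec] := rchain_head rc.
have G1 : Good q1 by apply: (Good_child Hw Hss Hlt Hir G0); rewrite rq1 inE.
by move: (IH G1); rewrite ec.
Qed.

Lemma Nn_good n q : Nn S K ltm Phi n q -> Good q.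
Proof.
elim=> [|m q1 q2 _ G1 [q0 [c [q0in rc <-]]]]; first exact: (Good_root ltm Hw Hss Hns Hch).
apply: rchain_good rc _; exact: (Good_child Hw Hss Hlt Hir G1).
Qed.

Lemma Good_size q : Good q -> (0 < size q.2)%N.
Proof.
case=> _ _ cov [x [Kx hx]] _; have [h hin _] := cov x Kx hx.
by case: q.2 hin.
Qed.

Definition nonneg (A : nat -> nat -> R) := forall i j, 0 <= A i j.
Definition colpos m n (A : nat -> nat -> R) := forall j, (j < n)%N -> 0 < \sum_(i < m) A i j.

Lemma muval_ge0 h : 0 <= muval mu h.
Proof. by rewrite /muval fine_ge0 // measure_ge0. Qed.

Lemma pw_gt0 w : 0 < pw p w.
Proof. case: Hw => _ Hp _; rewrite /pw; apply: prodr_gt0 => i _; exact: Hp. Qed.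

Lemma Tmx_ge0 q q' : nonneg (Tmx S Phi p mu q q').
Proof.
move=> i j; rewrite /Tmx; apply: mulr_ge0; first by apply: divr_ge0; apply: muval_ge0.
by apply: sumr_ge0 => w _; apply: ltW; apply: pw_gt0.
Qed.

Lemma mx1_ge0 : nonneg (@mx1 R).
Proof. by move=> i j; rewrite /mx1 ler0n. Qed.

Lemma mxm_ge0 n A B : nonneg A -> nonneg B -> nonneg (mxm n A B).
Proof. by move=> hA hB i k; rewrite /mxm; apply: sumr_ge0 => j _; apply: mulr_ge0. Qed.

Lemma chain_ge0 q c : nonneg (chain_mx S Phi p mu q c).
Proof.
elim: c q => [|q1 c IH] q /=; first exact: mx1_ge0.
apply: mxm_ge0; [exact: Tmx_ge0 | exact: IH].
Qed.

Lemma sum_pos_mul n (a b : nat -> R) : (forall l, (l < n)%N -> 0 < a l) ->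
  (forall l, 0 <= b l) -> 0 < \sum_(l < n) b l -> 0 < \sum_(l < n) a l * b l.
Proof.
move=> ha hb hs; rewrite lt_def sumr_ge0 ?andbT; last first.
  by move=> l _; apply: mulr_ge0 => //; apply: ltW; apply: ha.
apply/negP => /eqP h0.
have z : forall l : 'I_n, a l * b l = 0.
  move=> l; apply: (psumr_eq0P _ h0) => // l' _.
  by apply: mulr_ge0 => //; apply: ltW; apply: ha.
have : \sum_(l < n) b l = 0.
  apply: big1 => l _; have := z l; move/eqP; rewrite mulf_eq0 => /orP[|/eqP //].
  by rewrite gt_eqF // ha.
by move=> e; rewrite e ltxx in hs.
Qed.

Lemma colpos_mxm m n k A B : nonneg A -> nonneg B -> colpos m n A -> colpos n k B ->
  colpos m k (mxm n A B).
Proof.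
move=> hA hB cA cB j jk; rewrite /mxm.
rewrite exchange_big /=.
under eq_bigr do rewrite -mulr_suml.
apply: (sum_pos_mul (a := fun l => \sum_(i < m) A i l) (b := fun l => B l j)).
- exact: cA.
- by move=> l; apply: hB.
- exact: cB.
Qed.

Lemma colpos_mx1 n : colpos n n (@mx1 R).
Proof.
move=> j jn; rewrite (bigD1 (Ordinal jn)) //= /mx1 eqxx ltr_pwDl ?ltr01 //.
by apply: sumr_ge0 => i _; rewrite ler0n.
Qed.

Lemma Tmx_colpos q q0 : Good q -> q0 \in raw_children S K ltm Phi q ->
  colpos (size q.2) (size q0.2) (Tmx S Phi p mu q q0).
Proof.
move=> Gq q0in j jlt.
have G0 : Good q0 by apply: (Good_child Hw Hss Hlt Hir Gq).
have hin : nth (idm R) q0.2 j \in q0.2 by apply: mem_nth.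
have [g [gin _ eh]] := mem_childP q0in hin.
have [i [t [i1 i2 tin eg]]] := mem_YmapsP gin.
rewrite (bigD1 (Ordinal i1)) //=.
set rest := \sum_(i0 < size q.2 | i0 != Ordinal i1) _.
have hr : 0 <= rest by apply: sumr_ge0 => i' _; apply: Tmx_ge0.
suff hT : 0 < Tmx S Phi p mu q q0 i j by lra.
rewrite /Tmx; apply: mulr_gt0.
  apply: divr_gt0; apply: (muval_gt0 Hw Hss Hm Hch).
    by case: Gq => _ _ _ _; apply; apply: mem_nth.
  by case: G0 => _ _ _ _; apply.
rewrite (big_rem t tin) /= ifT; last first.
  case: G0 => lt0 _ _ _ _.
  by rewrite eh TJ_inv // eg.
have h1 := pw_gt0 t.
set rest2 := \sum_(w <- _ | _) _.
have h2 : 0 <= rest2 by apply: sumr_ge0 => w _; apply: ltW; apply: pw_gt0.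
lra.
Qed.

Lemma chain_colpos q0 c : rchain S K ltm Phi q0 c -> forall q, Good q ->
  q0 \in raw_children S K ltm Phi q ->
  colpos (size q.2) (size (last q0 c).2) (chain_mx S Phi p mu q c).
Proof.
elim=> [q1 _|q1 q2 c0 rq1 _ rc IH] q Gq q1in /=.
  apply: colpos_mxm; [exact: Tmx_ge0 | exact: mx1_ge0 | exact: Tmx_colpos | exact: colpos_mx1].
have G1 : Good q1 by apply: (Good_child Hw Hss Hlt Hir Gq).
have [c' ec] := rchain_head rc.
have -> : last q1 c0 = last q2 c0 by rewrite ec.
apply: colpos_mxm; [exact: Tmx_ge0 | exact: chain_ge0 | exact: Tmx_colpos | ].
by apply: IH => //; rewrite rq1 inE.
Qed.


Lemma edge_props e : Eset S K ltm Phi p mu e ->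
  [/\ nonneg (emat e), colpos (size (esrc e)) (size (etgt e)) (emat e),
      (0 < size (etgt e))%N, Vset S K ltm Phi (esrc e) & Vset S K ltm Phi (etgt e)].
Proof.
move=> [n [q [q0 [c [Nq q0in rc ->]]]]] /=.
have Gq := Nn_good Nq.
have G0 : Good q0 by apply: (Good_child Hw Hss Hlt Hir Gq).
split.
- exact: chain_ge0.
- exact: chain_colpos.
- exact: Good_size (rchain_good rc G0).
- by exists n, q.
- exists n.+1, (last q0 c); split => //.
  by apply: NS Nq _; exists q0, c.
Qed.

Lemma root_V : Vset S K ltm Phi (root_nb R).
Proof. by exists 0%N, (root_pair R); split => //; exact: N0. Qed.

End PartC.


Section PartD.
Variables (R : realType) (I : finType) (S : I -> amap R) (p : I -> R)
  (K : set R) (mu : probability R R) (ltm : rel (amap R))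
  (Phi : nbset R -> seq (seq (seq I))).

Local Notation E := (Eset S K ltm Phi p mu).
Local Notation V := (Vset S K ltm Phi).
Local Notation gp := (gpath S K ltm Phi p mu).
Local Notation rch := (reach S K ltm Phi p mu).
Local Notation LC := (loop_class S K ltm Phi p mu).
Local Notation ess := (essential S K ltm Phi p mu).

Hypothesis EV : forall e, E e -> V (esrc e) /\ V (etgt e).

Lemma gpath_cat v u w es1 es2 : gp v u es1 -> gp u w es2 -> gp v w (es1 ++ es2).
Proof.
elim: es1 v => [|e es1 IH] v /=; first by move=> ->.
by move=> [Ee se h1] h2; split => //; apply: IH h1 h2.
Qed.

Lemma gpath_catE v w es1 es2 : gp v w (es1 ++ es2) -> exists2 u, gp v u es1 & gp u w es2.
Proof.
elim: es1 v => [|e es1 IH] v /=; first by move=> h; exists v.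
by move=> [Ee se /IH [u h1 h2]]; exists u.
Qed.

Lemma reach_refl v : rch v v.
Proof. by exists [::]. Qed.

Lemma reach_trans u v w : rch u v -> rch v w -> rch u w.
Proof. by move=> [es1 h1] [es2 h2]; exists (es1 ++ es2); apply: gpath_cat h1 h2. Qed.

Lemma reach_edge e : E e -> rch (esrc e) (etgt e).
Proof. by move=> Ee; exists [:: e]. Qed.

Lemma reach_V v w : V v -> rch v w -> V w.
Proof.
move=> Vv [es]; elim: es v Vv => [|e es IH] v Vv /=; first by move=> <-.
by move=> [Ee _ h]; apply: IH h; case: (EV Ee).
Qed.

Definition SCC v := [set u | rch v u /\ rch u v].

Lemma SCC_path v a b es : gp a b es -> rch v a -> rch b v ->
  all (fun e => `[< SCC v (etgt e) >]) es.
Proof.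
elim: es a => [|e es IH] a //= [Ee se h] va bv.
have vt : rch v (etgt e) by apply: reach_trans va _; rewrite -se; apply: reach_edge.
apply/andP; split.
  apply/asboolP; split => //; apply: reach_trans bv; by exists es.
exact: IH h vt bv.
Qed.

Lemma SCC_sc v : strongly_connected S K ltm Phi p mu (SCC v).
Proof.
move=> u1 u2 [vu1 u1v] [vu2 u2v].
have [es1 h1] := u1v; have [es2 h2] := vu2.
exists (es1 ++ es2); split => //; first exact: gpath_cat h1 h2.
apply: SCC_path (gpath_cat h1 h2) vu1 u2v.
Qed.

Lemma SCC_LC v : V v -> (exists e, [/\ E e, SCC v (esrc e) & SCC v (etgt e)]) ->
  LC (SCC v).
Proof.
move=> Vv he; split.
- by move=> u [vu _]; apply: reach_V vu.
- exact: SCC_sc.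
- by [].
move=> L' sub _ sc _.
have L'v : L' v by apply: sub; split; apply: reach_refl.
apply/seteqP; split => //.
move=> u L'u; have [es1 [_ h1 _]] := sc _ _ L'v L'u; have [es2 [_ h2 _]] := sc _ _ L'u L'v.
by split; [exists es1 | exists es2].
Qed.

Lemma LC_SCC L v : LC L -> L v -> L = SCC v.
Proof.
move=> [LV sc [e [Ee Ls Lt]] mx] Lv.
have sub : L `<=` SCC v.
  move=> u Lu; have [es1 [_ h1 _]] := sc _ _ Lv Lu; have [es2 [_ h2 _]] := sc _ _ Lu Lv.
  by split; [exists es1 | exists es2].
apply/esym/mx => //.
- by move=> u [vu _]; apply: reach_V vu; apply: LV.
- exact: SCC_sc.
- by exists e; split => //; apply: sub.
Qed.

Definition internal e := exists L, [/\ LC L, L (esrc e) & L (etgt e)].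

Lemma back_internal e : E e -> rch (etgt e) (esrc e) -> internal e.
Proof.
move=> Ee ts; have [Vs _] := EV Ee.
have h1 : SCC (esrc e) (esrc e) by split; apply: reach_refl.
have h2 : SCC (esrc e) (etgt e) by split => //; apply: reach_edge.
exists (SCC (esrc e)); split => //; apply: SCC_LC => //.
by exists e.
Qed.


Definition essv x := exists L, [/\ LC L, ess L & L x].
Definition notess_src (l : seq (edge R)) := all (fun e => `[< ~ essv (esrc e) >]) l.
Definition PL (L : set (nbset R)) (e : edge R) := `[< L (esrc e) /\ L (etgt e) >].

Lemma split_path v w es : gp v w es -> exists pre suf u,
  [/\ es = pre ++ suf, gp v u pre, gp u w suf, notess_src pre & (suf = [::] \/ essv u)].
Proof.
elim: es v => [|e es IH] v /=.
  by move=> <-; exists [::], [::], v; split => //; left.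
move=> [Ee se h]; case: (pselect (essv v)) => hv.
  by exists [::], (e :: es), v; split => //=; right.
have [pre [suf [u [eq h1 h2 hn hs]]]] := IH _ h.
exists (e :: pre), suf, u; split => //=; first by rewrite eq.
by rewrite hn andbT; apply/asboolP; rewrite se.
Qed.

Lemma ess_suffix L u w es : ess L -> L u -> gp u w es -> all (PL L) es.
Proof.
move=> eL; elim: es u => [|e es IH] u //= Lu [Ee se h].
have Lt : L (etgt e) by apply: (eL u) => //; rewrite -se; apply: reach_edge.
by rewrite (IH _ Lt h) andbT; apply/asboolP; rewrite se.
Qed.

Lemma lam_nil L l : all (fun e => ~~ PL L e) l -> lam L l = [::].
Proof.
rewrite /lam /PL; elim: l => [|e l IH] //= /andP[h /IH].
by rewrite (negbTE h).
Qed.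

Lemma lam_all L l : all (PL L) l -> lam L l = l.
Proof.
rewrite /lam /PL; elim: l => [|e l IH] //= /andP[h /IH ->].
by rewrite h.
Qed.

Lemma LC_fin : finite_set V -> finite_set LC.
Proof.
move=> fV; apply: (sub_finite_set (B := SCC @` V)); last exact: finite_image.
move=> L LCL; have [_ _ [e [Ee Ls _]] _] := LCL.
exists (esrc e); first by case: LCL => LV _ _ _; apply: LV.
by rewrite -(LC_SCC LCL Ls).
Qed.

Lemma prod_cons_cond (T : Type) (P : pred T) (f : T -> R) x l :
  \prod_(j <- x :: l | P j) f j = (if P x then f x else 1) * \prod_(j <- l | P j) f j.
Proof. by rewrite big_cons; case: (P x); rewrite ?mul1r. Qed.

Lemma prod_internal (l : seq (edge R)) (f : edge R -> R) : finite_set LC ->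
  \big[*%R/1]_(L \in LC) \prod_(e <- l | PL L e) f e =
  \prod_(e <- l | `[< internal e >]) f e.
Proof.
move=> fin; elim: l => [|e l IH].
  by rewrite big_nil; apply: fsbig1 => L _; rewrite big_nil.
rewrite prod_cons_cond -IH.
under eq_fsbigr => L _ do rewrite prod_cons_cond.
rewrite fsbig_split //; congr (_ * _).
case: (pselect (internal e)) => [[L0 [LC0 s0 t0]] | ni].
  rewrite asboolT; last by exists L0.
  rewrite -(fsbig_widen [set L0] LC); first by rewrite fsbig_set1 /PL asboolT.
    by move=> L ->.
  move=> L [LCL nL0] /=; case: ifP => // /asboolP [s1 t1]; exfalso; apply: nL0.
  by rewrite /= (LC_SCC LCL s1) (LC_SCC LC0 s0).
rewrite asboolF //; apply: fsbig1 => L LCL; case: ifP => // /asboolP [s1 t1].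
by exfalso; apply: ni; exists L.
Qed.

End PartD.


Section PartE.
Variables (R : realType) (I : finType) (S : I -> amap R) (p : I -> R)
  (K : set R) (mu : probability R R) (ltm : rel (amap R))
  (Phi : nbset R -> seq (seq (seq I))).

Local Notation E := (Eset S K ltm Phi p mu).
Local Notation gp := (gpath S K ltm Phi p mu).

Lemma gp_last v w e l : gp v w (e :: l) -> E (last e l) /\ etgt (last e l) = w.
Proof.
elim: l v e => [|e' l IH] v e /= [Ee se h]; first by split => //; move: h => /= ->.
exact: IH h.
Qed.

Lemma gp_E v w l : gp v w l -> forall P : edge R -> Prop, (forall e, E e -> P e) ->
  all (fun e => `[< P e >]) l.
Proof.
elim: l v => [|e l IH] v //= [Ee _ h] P HP.
by rewrite (IH _ h P HP) andbT; apply/asboolP; apply: HP.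
Qed.

Lemma Tpath_cat v u pre suf : gp v u pre -> forall i k, (i < size v)%N ->
  Tpath (pre ++ suf) i k = \sum_(l < size u) Tpath pre i l * Tpath suf l k.
Proof.
elim: pre v => [|e pre IH] v /=.
  move=> <- i k ilt; rewrite (bigD1 (Ordinal ilt)) //= /mx1 eqxx mul1r big1 ?addr0 //.
  move=> l hl; rewrite eq_sym; case: eqP => [el|]; last by rewrite mul0r.
  by exfalso; move/negP: hl; apply; apply/eqP; apply: val_inj.
move=> [Ee se h] i k _.
rewrite /mxm.
transitivity (\sum_(l < size (etgt e)) \sum_(m < size u)
   emat e i l * (Tpath pre l m * Tpath suf m k)).
  by apply: eq_bigr => l _; rewrite (IH _ h l k (ltn_ord l)) mulr_sumr.
rewrite exchange_big /=; apply: eq_bigr => m _.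
rewrite mulr_suml; apply: eq_bigr => l _; by rewrite mulrA.
Qed.

Definition one (e : edge R) := (size (esrc e) == 1%N) && (size (etgt e) == 1%N).

Lemma all_last (T : Type) (P : pred T) x l : all P (x :: l) -> P (last x l).
Proof. by elim: l x => [|y l IH] x /= => [/andP[]|/andP[_ h]] //; apply: IH. Qed.

Lemma Tpath_scal l : all one l -> Tpath l 0 0 = \prod_(e <- l) emat e 0 0.
Proof.
elim: l => [|e l IH] /=; first by rewrite big_nil /mx1.
move=> /andP[/andP[_ /eqP h1] al]; rewrite big_cons /mxm -IH //.
by rewrite h1 big_ord1.
Qed.

Lemma pnorm_scal l : all one l -> pnorm l = \prod_(e <- l) emat e 0 0.
Proof.
case: l => [|e l]; first by rewrite big_nil.
move=> al; have /andP[_ /eqP hl] := all_last al.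
move: (al) => /andP[/andP[/eqP h0 _] _].
rewrite /pnorm /mxnorm h0 hl !big_ord1; exact: Tpath_scal.
Qed.

Lemma Tpath_ge0 l : (forall e, E e -> forall i j, 0 <= emat e i j) ->
  forall v w, gp v w l -> forall i j, 0 <= Tpath l i j.
Proof.
move=> hnn; elim: l => [|e l IH] v w /=; first by move=> _ i j; rewrite /mx1 ler0n.
move=> [Ee _ h] i j; rewrite /mxm; apply: sumr_ge0 => k _.
apply: mulr_ge0; [exact: hnn | exact: IH h _ _].
Qed.


Local Notation ib e := (`[< internal S p K mu ltm Phi e >]).
Definition bcount (l : seq (edge R)) := count (fun e => ~~ ib e) l.
Definition Pp (l : seq (edge R)) := \prod_(e <- l | ib e) emat e 0 0.

Variables (N Mx d : R).
Hypothesis Hnn : forall e, E e -> forall i j, 0 <= emat e i j.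
Hypothesis HN : forall e, E e -> (size (etgt e))%:R <= N.
Hypothesis HMx : forall e, E e -> forall i j, (i < size (esrc e))%N -> (j < size (etgt e))%N ->
  emat e i j <= Mx.
Hypothesis Hd : forall e, E e -> forall j, (j < size (etgt e))%N ->
  d <= \sum_(i < size (esrc e)) emat e i j.
Hypothesis N0 : 0 <= N.
Hypothesis Mx0 : 0 <= Mx.
Hypothesis d0 : 0 <= d.

Lemma Pp_ge0 v w l : gp v w l -> 0 <= Pp l.
Proof.
elim: l v => [|e l IH] v /=; first by rewrite /Pp big_nil.
move=> [Ee _ h]; rewrite /Pp prod_cons_cond; apply: mulr_ge0; last exact: IH h.
by case: ifP => _ //; apply: Hnn.
Qed.

Lemma Tpath_bounds v u l : gp v u l -> all (fun e => ib e ==> one e) l ->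
  (forall i j, (i < size v)%N -> (j < size u)%N ->
     Tpath l i j <= (N * Mx) ^+ bcount l * Pp l) /\
  (forall j, (j < size u)%N -> d ^+ bcount l * Pp l <= \sum_(i < size v) Tpath l i j).
Proof.
elim: l v => [|e l IH] v.
  move=> /= <- _; rewrite /bcount /Pp big_nil expr0 !mulr1; split.
    by move=> i j _ _; rewrite /mx1; case: eqP => _; rewrite ?lexx ?ler01.
  move=> j jlt; rewrite (bigD1 (Ordinal jlt)) //= /mx1 eqxx.
  rewrite lerDl; apply: sumr_ge0 => i _; exact: ler0n.
move=> [Ee se h] /andP[hone al].
have [IHa IHb] := IH _ h al.
have T0 := Tpath_ge0 Hnn h.
have P0 := Pp_ge0 h.
have hE := Hnn Ee.
case hi : (ib e).
  move: hone; rewrite hi /= => /andP[/eqP s1 /eqP t1].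
  have ePp : Pp (e :: l) = emat e 0 0 * Pp l by rewrite /Pp prod_cons_cond hi.
  have eb : (~~ ib e + bcount l)%N = bcount l by rewrite hi.
  rewrite ePp eb -se s1; split.
    move=> i j; rewrite ltnS leqn0 => /eqP -> jlt.
    rewrite /mxm t1 big_ord1 mulrCA; apply: ler_wpM2l => //.
    by apply: IHa => //; rewrite t1.
  move=> j jlt; rewrite big_ord1 /mxm t1 big_ord1 mulrCA; apply: ler_wpM2l => //.
  by have := IHb j jlt; rewrite t1 big_ord1.
have ePp : Pp (e :: l) = Pp l by rewrite /Pp prod_cons_cond hi mul1r.
have eb : bcount (e :: l) = (bcount l).+1 by rewrite /bcount /= hi.
rewrite ePp eb; split.
  move=> i j ilt jlt; rewrite /mxm.
  apply: (le_trans (y := \sum_(k < size (etgt e)) Mx * ((N * Mx) ^+ bcount l * Pp l))).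
    apply: ler_sum => k _; apply: ler_pM; [exact: hE | exact: T0 | | exact: IHa].
    by apply: HMx => //; rewrite se.
  rewrite sumr_const card_ord -mulr_natl exprS mulrA.
  rewrite -!mulrA; apply: ler_wpM2r; last exact: HN.
  by apply: mulr_ge0 => //; apply: mulr_ge0 => //; apply: exprn_ge0; apply: mulr_ge0.
move=> j jlt; rewrite /mxm exchange_big /=.
under eq_bigr do rewrite -mulr_suml.
apply: (le_trans (y := \sum_(k < size (etgt e)) d * Tpath l k j)); last first.
  apply: ler_sum => k _; apply: ler_wpM2r; first exact: T0.
  by rewrite -se; apply: Hd.
rewrite -mulr_sumr exprS -mulrA; apply: ler_wpM2l => //.
exact: IHb.
Qed.

End PartE.


Section PartF.
Variables (R : realType) (I : finType) (S : I -> amap R) (p : I -> R)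
  (K : set R) (mu : probability R R) (ltm : rel (amap R))
  (Phi : nbset R -> seq (seq (seq I))).

Local Notation E := (Eset S K ltm Phi p mu).
Local Notation V := (Vset S K ltm Phi).
Local Notation gp := (gpath S K ltm Phi p mu).
Local Notation rch := (reach S K ltm Phi p mu).
Local Notation LC := (loop_class S K ltm Phi p mu).
Local Notation ess := (essential S K ltm Phi p mu).
Local Notation ib e := (`[< internal S p K mu ltm Phi e >]).

Lemma seq_norm_le (s : seq R) y : y \in s -> `|y| <= \sum_(x <- s) `|x|.
Proof.
elim: s => [//|x s IH]; rewrite inE big_cons => /orP[/eqP ->|ys].
  by rewrite lerDl sumr_ge0 // => i _; exact: normr_ge0.
by apply: le_trans (IH ys) _; rewrite lerDr normr_ge0.
Qed.

Lemma fin_ub (T : Type) (A : set T) (g : T -> R) : finite_set A ->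
  exists M, 0 <= M /\ forall a, A a -> g a <= M.
Proof.
move=> fA; have /finite_seqP [s hs] := finite_image g fA.
exists (\sum_(x <- s) `|x|); split; first by apply: sumr_ge0 => i _; exact: normr_ge0.
move=> a Aa; have : g a \in s.
  by have : [set` s] (g a) by rewrite -hs; exists a.
by move=> gs; apply: le_trans (ler_norm _) (seq_norm_le gs).
Qed.

Hypothesis EV : forall e, E e -> V (esrc e) /\ V (etgt e).

Lemma srcs_reach v w es (P : pred (edge R)) x : gp v w es ->
  x \in [seq esrc e | e <- es & P e] -> rch v x.
Proof.
elim: es v => [//|e es IH] v /= [Ee se h].
case: (P e) => /=; first rewrite inE; move=> hx.
  case/orP: hx => [/eqP ->|hx]; first by rewrite se; apply: reach_refl.
  by apply: reach_trans (IH _ h hx); rewrite -se; apply: reach_edge.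
by apply: reach_trans (IH _ h hx); rewrite -se; apply: reach_edge.
Qed.

Lemma bridges_uniq v w es : gp v w es -> uniq [seq esrc e | e <- es & ~~ ib e].
Proof.
elim: es v => [//|e es IH] v /= [Ee se h].
case hi : (ib e) => /=; first exact: IH h.
rewrite (IH _ h) andbT; apply/negP => hin.
have := srcs_reach h hin => back.
have : internal S p K mu ltm Phi e by apply: back_internal.
by move/asboolP; rewrite hi.
Qed.

Lemma bridges_V v w es : V v -> gp v w es -> all (fun x => `[< V x >]) [seq esrc e | e <- es & ~~ ib e].
Proof.
elim: es v => [//|e es IH] v /= Vv [Ee se h].
have Vt := (EV Ee).2.
case: (~~ ib e) => /=; last exact: IH h.
by rewrite (IH _ Vt h) andbT; apply/asboolP; rewrite se.
Qed.

Lemma bcount_le v w es : V v -> gp v w es -> forall s, V = [set` s] ->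
  (bcount S p K mu ltm Phi es <= size s)%N.
Proof.
move=> Vv h s hs.
have -> : bcount S p K mu ltm Phi es = size [seq esrc e | e <- es & ~~ ib e].
  by rewrite size_map size_filter.
apply: uniq_leq_size; first exact: bridges_uniq h.
move=> x hx; have := bridges_V Vv h; move/allP => /(_ x hx) /asboolP.
by rewrite hs.
Qed.


Hypothesis Hne : forall L, LC L -> ~ ess L -> forall v, L v -> size v = 1%N.
Local Notation essv := (essv S p K mu ltm Phi).
Local Notation notess_src := (notess_src S p K mu ltm Phi).

Lemma lam_cat (L : set (nbset R)) (a b : seq (edge R)) : lam L (a ++ b) = lam L a ++ lam L b.
Proof. by rewrite /lam filter_cat. Qed.

Lemma all_one_lam L l : LC L -> ~ ess L -> all (@one R) (lam L l).
Proof.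
move=> LCL nL; rewrite /lam; elim: l => [//|e l IH] /=.
case: ifP => [/asboolP [s1 t1]|_] //=.
by rewrite IH andbT /one (Hne LCL nL s1) (Hne LCL nL t1).
Qed.

Lemma pre_one pre : notess_src pre -> all (fun e => ib e ==> one e) pre.
Proof.
elim: pre => [//|e pre IH] /= /andP[/asboolP ne /IH ->]; rewrite andbT.
apply/implyP => /asboolP [L [LCL s1 t1]].
have nL : ~ ess L by move=> eL; apply: ne; exists L.
by rewrite /one (Hne LCL nL s1) (Hne LCL nL t1).
Qed.

Lemma Pi_split pre suf u w : finite_set LC -> gp u w suf -> notess_src pre ->
  (suf = [::] \/ essv u) ->
  \big[*%R/1]_(L \in LC) pnorm (lam L (pre ++ suf)) =
  Pp S p K mu ltm Phi pre * pnorm suf.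
Proof.
move=> fin hsuf hpre hs.
have key : forall L, LC L -> (suf = [::] \/ exists L0, [/\ LC L0, ess L0, L0 u & L <> L0]) ->
    lam L suf = [::].
  move=> L LCL [->//|[L0 [LC0 e0 L0u nLL0]]].
  apply: lam_nil; apply: sub_all (ess_suffix e0 L0u hsuf) => e /asboolP [s0 _].
  apply/negP => /asboolP [s1 _]; apply: nLL0.
  by rewrite (LC_SCC EV LCL s1) (LC_SCC EV LC0 s0).
have key2 : forall L, LC L -> ess L -> lam L pre = [::].
  move=> L LCL eL; apply: lam_nil; apply: sub_all hpre => e /asboolP ne.
  by apply/negP => /asboolP [s1 _]; apply: ne; exists L.
transitivity (\big[*%R/1]_(L \in LC)
   ((\prod_(e <- pre | PL L e) emat e 0 0) * pnorm (lam L suf))).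
  apply: eq_fsbigr => L /[!inE] LCL; rewrite lam_cat.
  case: (pselect (ess L)) => eL.
    have h2 := key2 L LCL eL.
    have -> : \prod_(e <- pre | PL L e) emat e 0 0 = 1.
      by rewrite -big_filter; move: h2; rewrite /lam /PL => ->; rewrite big_nil.
    by rewrite h2 mul1r.
  have h1 : lam L suf = [::].
    apply: key => //; case: hs => [->|[L0 [LC0 e0 L0u]]]; [by left | right].
    by exists L0; split => // eq; apply: eL; rewrite eq.
  rewrite h1 cats0 mulr1 pnorm_scal; last exact: all_one_lam.
  by rewrite /lam big_filter.
rewrite fsbig_split // prod_internal //; congr (_ * _).
case: hs => [hs0|[L0 [LC0 e0 L0u]]].
  by rewrite hs0; apply: fsbig1 => L _.
rewrite -(fsbig_widen [set L0] LC); first by rewrite fsbig_set1 lam_all // (ess_suffix e0 L0u hsuf).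
  by move=> L ->.
move=> L [LCL nL] /=; rewrite key //; right; by exists L0.
Qed.

End PartF.


Section PartG.
Variables (R : realType) (I : finType) (S : I -> amap R) (p : I -> R)
  (K : set R) (mu : probability R R) (ltm : rel (amap R))
  (Phi : nbset R -> seq (seq (seq I))).

Local Notation E := (Eset S K ltm Phi p mu).
Local Notation V := (Vset S K ltm Phi).
Local Notation gp := (gpath S K ltm Phi p mu).
Local Notation LC := (loop_class S K ltm Phi p mu).
Local Notation ess := (essential S K ltm Phi p mu).

Lemma entry_le1 n (x : nat -> R) k : (forall i, 0 <= x i) -> (k < n)%N ->
  x k <= \sum_(i < n) x i.
Proof.
move=> h kn; rewrite (bigD1 (Ordinal kn)) //= lerDl.
by apply: sumr_ge0 => i _.
Qed.

Lemma entry_le2 m n (A : nat -> nat -> R) i j : (forall i j, 0 <= A i j) ->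
  (i < m)%N -> (j < n)%N -> A i j <= \sum_(i < m) \sum_(j < n) A i j.
Proof.
move=> h im jn; apply: le_trans (entry_le1 (x := fun i => \sum_(j < n) A i j) _ im).
  exact: entry_le1.
by move=> k; apply: sumr_ge0.
Qed.

Hypothesis Hw : is_wifs S p.
Hypothesis Hss : is_ss_set S K.
Hypothesis Hm : is_ss_measure S p mu.
Hypothesis Hns : ~ exists x : R, K = [set x].
Hypothesis Hch : convex_hull K = [set x | 0 <= x <= 1].
Hypothesis Hlt : strict_total_order ltm.
Hypothesis Hir : iteration_rule S K ltm Phi.
Hypothesis Hfnc : FNC S K ltm Phi p mu.
Hypothesis Hne : forall L, LC L -> ~ ess L -> forall v, L v -> size v = 1%N.

Theorem main_thm : decomposable S K ltm Phi p mu.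
Proof.
have [fV fE] := Hfnc.
have ep := edge_props Hw Hss Hm Hns Hch Hlt Hir.
have EV : forall e, E e -> V (esrc e) /\ V (etgt e) by move=> e /ep [].
have Hnn : forall e, E e -> forall i j, 0 <= emat e i j by move=> e /ep [].
have fLC := LC_fin EV fV.
have [s hs] := (iffLR (finite_seqP V)) fV.
set nV := size s.
have [M1 [M10 HM1]] := @fin_ub R _ _ (fun e => (size (etgt e))%:R) fE.
have [M2 [M20 HM2]] := @fin_ub R _ _ (fun e => \sum_(i < size (esrc e)) \sum_(j < size (etgt e)) emat e i j) fE.
have [M3 [M30 HM3]] := @fin_ub R _ _ (fun e => \sum_(j < size (etgt e)) (\sum_(i < size (esrc e)) emat e i j)^-1) fE.
set N := M1 + 1; set Mx := M2 + 1; set d := (M3 + 1)^-1.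
have N1 : 1 <= N by rewrite /N lerDr.
have Mx1 : 1 <= Mx by rewrite /Mx lerDr.
have dpos : 0 < d by rewrite /d invr_gt0 ltr_wpDl.
have d1 : d <= 1 by rewrite /d invf_le1 ?ltr_wpDl // lerDr.
have N0 : 0 <= N by apply: le_trans N1.
have Mx0 : 0 <= Mx by apply: le_trans Mx1.
have HN : forall e, E e -> (size (etgt e))%:R <= N.
  by move=> e Ee; apply: le_trans (HM1 _ Ee) _; rewrite /N lerDl.
have HMx : forall e, E e -> forall i j, (i < size (esrc e))%N -> (j < size (etgt e))%N ->
    emat e i j <= Mx.
  move=> e Ee i j il jl; apply: le_trans (entry_le2 (Hnn e Ee) il jl) _.
  by apply: le_trans (HM2 _ Ee) _; rewrite /Mx lerDl.
have Hd : forall e, E e -> forall j, (j < size (etgt e))%N ->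
    d <= \sum_(i < size (esrc e)) emat e i j.
  move=> e Ee j jl; have [_ cp _ _ _] := ep _ Ee.
  have c0 := cp j jl.
  have : (\sum_(i < size (esrc e)) emat e i j)^-1 <= M3 + 1.
    apply: le_trans (entry_le1 (x := fun j => (\sum_(i < size (esrc e)) emat e i j)^-1) _ jl) _.
      by move=> k; rewrite invr_ge0; apply: sumr_ge0 => i _; apply: Hnn.
    by apply: le_trans (HM3 _ Ee) _; rewrite lerDl.
  rewrite /d -[X in _ -> _ <= X]invrK lef_pV2 // ?posrE ?invr_gt0 // ltr_wpDl //.
have d0 : 0 <= d by apply: ltW.
set C := (d ^+ nV)^-1 + N * (N * Mx) ^+ nV.
have dn0 : 0 < d ^+ nV by apply: exprn_gt0.
have dn1 : d ^+ nV <= 1 by apply: exprn_ile1.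
have NMx1 : 1 <= N * Mx by rewrite -[1]mulr1; apply: ler_pM.
have NMxn : 0 <= N * (N * Mx) ^+ nV.
  by apply: mulr_ge0 => //; apply: exprn_ge0; apply: le_trans NMx1.
have invdn : 1 <= (d ^+ nV)^-1 by rewrite invf_ge1.
have C1 : 1 <= C by rewrite /C; apply: le_trans invdn _; rewrite lerDl.
have C0 : 0 < C by apply: lt_le_trans C1.
have Cinv : C^-1 <= d ^+ nV.
  rewrite -[X in _ <= X]invrK lef_pV2 ?posrE ?invr_gt0 //.
  by rewrite /C lerDl.
exists C; split => // w es h.
case: es h => [|e0 es'] h.
  have -> : \big[*%R/1]_(L \in LC) pnorm (lam L [::]) = 1 by apply: fsbig1.
  rewrite /= mulr1; split; last by [].
  by rewrite mulr1 invf_le1.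
have [pre [suf [u [ees hpre hsuf hn hsu]]]] := split_path h.
rewrite ees (Pi_split EV Hne fLC hsuf hn hsu) -ees.
set P := Pp S p K mu ltm Phi pre.
set b := bcount S p K mu ltm Phi pre.
have P0 : 0 <= P by apply: Pp_ge0 Hnn _ _ _ hpre.
have bn : (b <= nV)%N by apply: bcount_le EV _ _ _ (root_V S K ltm Phi) hpre s hs.
have [Ha Hb] := Tpath_bounds Hnn HN HMx Hd N0 Mx0 d0 hpre (pre_one Hne hn).
have [Elast tw] := gp_last h.
have se0 : esrc e0 = root_nb R by case: h.
have Tsuf0 := Tpath_ge0 Hnn hsuf.
set r := fun l => \sum_(j < size w) Tpath suf l j.
have r0 : forall l, 0 <= r l by move=> l; apply: sumr_ge0 => j _.
set Q := \sum_(l < size u) r l.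
have Q0 : 0 <= Q by apply: sumr_ge0.
have pnE : pnorm (e0 :: es') = \sum_(l < size u) Tpath pre 0 l * r l.
  rewrite /pnorm /mxnorm se0 tw (_ : size (root_nb R) = 1%N) // big_ord1 ees.
  under eq_bigr => j _ do rewrite (Tpath_cat suf hpre j (ltn0Sn 0)).
  rewrite exchange_big /=; apply: eq_bigr => l _; by rewrite mulr_sumr.
have hQ : pnorm suf <= Q /\ Q <= N * pnorm suf.
  case Es : suf hsuf => [|e1 suf'] hsuf.
    move: hsuf => /= eu; subst u.
    have -> : Q = (size w)%:R.
      rewrite /Q /r Es /=.
      transitivity (\sum_(l < size w) (1 : R)); last by rewrite sumr_const card_ord.
      apply: eq_bigr => l _; rewrite (bigD1 l) //= /mx1 eqxx big1 ?addr0 // => j hj.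
      case: eqP => // e; exfalso; move/negP: hj; apply; apply/eqP; apply: val_inj; by rewrite /= e.
    have [_ _ sz _ _] := ep _ Elast.
    rewrite /= mulr1; split; last by rewrite -tw; apply: HN.
    by rewrite ler1n -tw.
  have [_ tw1] := gp_last hsuf.
  have se1 : esrc e1 = u by case: hsuf.
  have -> : pnorm (e1 :: suf') = Q by rewrite /pnorm /mxnorm se1 tw1 /Q /r Es.
  split => //; rewrite -[X in X <= _]mul1r; apply: ler_wpM2r => //.
have ps0 : 0 <= pnorm suf.
  case Es2 : suf => [|e1 suf']; first exact: ler01.
  rewrite /mxnorm; apply: sumr_ge0 => i _; apply: sumr_ge0 => j _.
  by move: (Tsuf0 i j); rewrite Es2.
rewrite pnE; split.
  apply: (le_trans (y := d ^+ b * P * Q)).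
    rewrite mulrA; apply: ler_pM => //.
    + by apply: mulr_ge0 => //; rewrite invr_ge0; apply: ltW.
    + apply: ler_wpM2r => //; apply: le_trans Cinv _.
      exact: ler_wiXn2l.
    + by case: hQ.
  rewrite /Q mulr_sumr; apply: ler_sum => l _; apply: ler_wpM2r => //.
  by have := Hb l (ltn_ord l); rewrite big_ord1.
apply: (le_trans (y := (N * Mx) ^+ b * P * Q)).
  rewrite /Q mulr_sumr; apply: ler_sum => l _; apply: ler_wpM2r => //.
  exact: Ha.
have e1 : (N * Mx) ^+ b <= (N * Mx) ^+ nV by apply: ler_weXn2l.
apply: (le_trans (y := (N * Mx) ^+ nV * P * (N * pnorm suf))).
  apply: ler_pM => //.
  + by apply: mulr_ge0 => //; apply: exprn_ge0; apply: le_trans NMx1.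
  + by apply: ler_wpM2r.
  + by case: hQ.
have -> : (N * Mx) ^+ nV * P * (N * pnorm suf) = (N * (N * Mx) ^+ nV) * (P * pnorm suf) by ring.
apply: ler_wpM2r; first exact: mulr_ge0.
by rewrite /C lerDr; apply: ltW; rewrite invr_gt0.
Qed.

End PartG.


Unset Implicit Arguments.

Theorem lemma4p10 (R : realType) (I : finType) (S : I -> amap R) (p : I -> R)
  (K : set R) (mu : probability R R) (ltm : rel (amap R))
  (Phi : nbset R -> seq (seq (seq I))) :
  is_wifs S p ->
  is_ss_set S K ->
  is_ss_measure S p mu ->
  (~ exists x : R, K = [set x]) ->
  convex_hull K = [set x | 0 <= x <= 1] ->
  strict_total_order ltm ->
  iteration_rule S K ltm Phi ->
  FNC S K ltm Phi p mu ->
  (forall L, loop_class S K ltm Phi p mu L -> ~ essential S K ltm Phi p mu L ->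
     forall v, L v -> size v = 1%N) ->
  decomposable S K ltm Phi p mu.
Proof.
move=> Hw Hss Hm Hns Hch Hlt Hir Hfnc Hne.
exact: (main_thm Hw Hss Hm Hns Hch Hlt Hir Hfnc Hne).
Qed.
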